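(* Let $G=(V,E)$ be a cactus. If $X,Y\subseteq V$ are such that $\mathbf v(X)$ and $\mathbf v(Y)$ are distinct and adjacent vertices of $\mathrm{CUT}(G)$ (i.e. joined by an edge of the 1-skeleton of $\mathrm{CUT}(G)$), then $|\delta(X\triangle Y)|\le 2$.
   Context: For an undirected graph $G=(V,E)$ and $S\subseteq V$, $\delta(S)\subseteq E$ denotes the set of edges with exactly one endpoint in $S$, and $\mathbf v(S)\in\{0,1\}^{E}$ is its incidence vector ($v(S)_e=1$ iff $e\in\delta(S)$). The cut polytope is $\mathrm{CUT}(G)=\operatorname{conv}\{\mathbf v(S):S\subseteq V\}\subset\mathbb R^{E}$. The 1-skeleton of a polytope is the graph whose vertices are the polytope's vertices and whose edges are its one-dimensional faces. $X\triangle Y$ denotes symmetric difference. A cactus is a connected graph in which every edge belongs to at most one simple cycle. *)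

(* Defs.v *)
From HB Require Import structures.
From mathcomp Require Import all_boot all_order all_algebra.
From mathcomp Require Import reals.
Set Implicit Arguments. Unset Strict Implicit. Unset Printing Implicit Defensive.
Import Order.TTheory GRing.Theory Num.Theory.
Local Open Scope ring_scope.

Definition simple_graph (V : finType) (E : {set {set V}}) : Prop :=
  forall f, f \in E -> #|f| = 2%N.

Definition adj (V : finType) (E : {set {set V}}) : rel V :=
  fun u v => [set u; v] \in E.

Definition connected_graph (V : finType) (E : {set {set V}}) : Prop :=
  forall u v : V, connect (adj E) u v.

Definition simple_cycle (V : finType) (E : {set {set V}}) (s : seq V) : Prop :=
  [/\ (3 <= size s)%N, uniq s & cycle (adj E) s].

Definition cycle_edges (V : finType) (s : seq V) : {set {set V}} :=
  [set [set x; next s x] | x in s].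

Definition cactus (V : finType) (E : {set {set V}}) : Prop :=
  connected_graph E /\
  forall f, f \in E -> forall s1 s2, simple_cycle E s1 -> simple_cycle E s2 ->
    f \in cycle_edges s1 -> f \in cycle_edges s2 -> cycle_edges s1 = cycle_edges s2.

(* The coordinate index set E, as a finite type. *)
Definition edge (V : finType) (E : {set {set V}}) := {f : {set V} | f \in E}.

Definition delta (V : finType) (E : {set {set V}}) (S : {set V}) : {set {set V}} :=
  [set f in E | #|f :&: S| == 1%N].

Definition cutvec (R : realType) (V : finType) (E : {set {set V}}) (S : {set V})
  : edge E -> R := fun f => (val f \in delta E S)%:R.
Arguments cutvec R {V} E S _.

Definition dotp (R : realType) (V : finType) (E : {set {set V}}) (c x : edge E -> R) : R :=
  \sum_(f : edge E) c f * x f.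

(* CUT(G) = conv { v(S) : S subset V } *)
Definition CUT (R : realType) (V : finType) (E : {set {set V}}) (x : edge E -> R) : Prop :=
  exists lam : {set V} -> R,
    [/\ forall S, 0 <= lam S, \sum_(S : {set V}) lam S = 1 &
        forall f, x f = \sum_(S : {set V}) lam S * cutvec R E S f].

Definition is_face (R : realType) (V : finType) (E : {set {set V}})
  (P F : (edge E -> R) -> Prop) : Prop :=
  exists (c : edge E -> R) (c0 : R),
    (forall x, P x -> dotp c x <= c0) /\
    (forall x, F x <-> (P x /\ dotp c x = c0)).

Definition segment (R : realType) (V : finType) (E : {set {set V}}) (u v : edge E -> R)
  : (edge E -> R) -> Prop :=
  fun x => exists t : R, [/\ 0 <= t, t <= 1 & forall f, x f = t * u f + (1 - t) * v f].

(* u and v are distinct vertices joined by an edge (1-dimensional face) of P: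
   a 1-dimensional face of a polytope is the segment between its two vertices. *)
Definition skeleton_adjacent (R : realType) (V : finType) (E : {set {set V}})
  (P : (edge E -> R) -> Prop) (u v : edge E -> R) : Prop :=
  u <> v /\ is_face P (segment u v).

Definition symdiff (V : finType) (X Y : {set V}) : {set V} := (X :\: Y) :|: (Y :\: X).

(* Main.v *)
Require Import Defs.
From HB Require Import structures.
From mathcomp Require Import all_boot all_order all_algebra.
From mathcomp Require Import reals.
From mathcomp Require Import lra zify.
Set Implicit Arguments. Unset Strict Implicit. Unset Printing Implicit Defensive.
Import Order.TTheory GRing.Theory Num.Theory.
Local Open Scope ring_scope.

Lemma in_symdiff (V : finType) (X Y : {set V}) v :
  (v \in symdiff X Y) = ((v \in X) != (v \in Y)).
Proof. by rewrite /symdiff !inE; case: (v \in X); case: (v \in Y). Qed.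

Lemma pair_delta (V : finType) (E : {set {set V}}) (S : {set V}) (x y : V) :
  x != y -> ([set x; y] \in delta E S) = ([set x; y] \in E) && ((x \in S) != (y \in S)).
Proof.
move=> xy; have yx : y != x by rewrite eq_sym.
rewrite /delta inE; congr andb.
case xS: (x \in S); case yS: (y \in S) => /=.
- have -> : [set x; y] :&: S = [set x; y].
    by apply/setP=> v; rewrite !inE; case: (eqVneq v x) => [?|vx];
      [subst v; rewrite /= ?xS ?yS ?(negbTE xy) ?(negbTE yx) // | ];
      case: (eqVneq v y) => [?|vy]; [subst v; rewrite ?orbT /= ?xS ?yS ?(negbTE xy) ?(negbTE yx) // | ];
      rewrite ?(negbTE vx) ?(negbTE vy).
  by rewrite cards2 xy.
- have -> : [set x; y] :&: S = [set x].
    by apply/setP=> v; rewrite !inE; case: (eqVneq v x) => [?|vx];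
      [subst v; rewrite /= ?xS ?yS ?(negbTE xy) ?(negbTE yx) // | ];
      case: (eqVneq v y) => [?|vy]; [subst v; rewrite ?orbT /= ?xS ?yS ?(negbTE xy) ?(negbTE yx) // | ];
      rewrite ?(negbTE vx) ?(negbTE vy).
  by rewrite cards1.
- have -> : [set x; y] :&: S = [set y].
    by apply/setP=> v; rewrite !inE; case: (eqVneq v x) => [?|vx];
      [subst v; rewrite /= ?xS ?yS ?(negbTE xy) ?(negbTE yx) // | ];
      case: (eqVneq v y) => [?|vy]; [subst v; rewrite ?orbT /= ?xS ?yS ?(negbTE xy) ?(negbTE yx) // | ];
      rewrite ?(negbTE vx) ?(negbTE vy) ?(negbTE xy) // eq_sym.
  by rewrite cards1.
- have -> : [set x; y] :&: S = set0.
    by apply/setP=> v; rewrite !inE; case: (eqVneq v x) => [?|vx];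
      [subst v; rewrite /= ?xS ?yS ?(negbTE xy) ?(negbTE yx) // | ];
      case: (eqVneq v y) => [?|vy]; [subst v; rewrite ?orbT /= ?xS ?yS ?(negbTE xy) ?(negbTE yx) // | ];
      rewrite ?(negbTE vx) ?(negbTE vy).
  by rewrite cards0.
Qed.

Lemma edge_pair (V : finType) (E : {set {set V}}) (HG : simple_graph E) f :
  f \in E -> exists x y, x != y /\ f = [set x; y].
Proof. by move=> /HG /eqP /cards2P. Qed.

Lemma delta_orient (V : finType) (E : {set {set V}}) (HG : simple_graph E) Z f :
  f \in delta E Z -> exists z w, [/\ z \in Z, w \notin Z, f \in E & f = [set z; w]].
Proof.
move=> fd; have fE : f \in E by move: fd; rewrite inE => /andP[].
have [x [y [xy ef]]] := edge_pair HG fE.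
move: fd; rewrite ef pair_delta // -ef fE /=.
case xZ: (x \in Z); case yZ: (y \in Z) => //= _.
- by exists x, y; rewrite xZ yZ -ef.
- by exists y, x; rewrite xZ yZ setUC -ef.
Qed.
Lemma CUT_cutvec (R : realType) (V : finType) (E : {set {set V}}) S :
  CUT (cutvec R E S).
Proof.
exists (fun T => (T == S)%:R); split.
- by move=> T; rewrite ler0n.
- by rewrite (bigD1 S) //= eqxx big1 ?addr0 // => T /negbTE ->.
- move=> f; rewrite (bigD1 S) //= eqxx mul1r big1 ?addr0 // => T /negbTE ->.
  by rewrite mul0r.
Qed.

Lemma cutvec_pair (R : realType) (V : finType) (E : {set {set V}}) S (f : edge E) x y :
  x != y -> val f = [set x; y] -> cutvec R E S f = ((x \in S) != (y \in S))%:R.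
Proof.
move=> xy ef; rewrite /cutvec ef pair_delta // -ef (valP f).
done.
Qed.

Lemma bits_sum (R : realType) (bX bY bW : bool) :
  (bW -> bX != bY) ->
  ((bX != bW)%:R + (bY != bW)%:R : R) = bX%:R + bY%:R.
Proof. case: bX; case: bY; case: bW => /= h; first [done | by rewrite addrC | by case: (h isT)]. Qed.

Lemma poly_contra (R : realType) (V : finType) (E : {set {set V}}) (HG : simple_graph E)
  (X Y W : {set V}) :
  skeleton_adjacent (@CUT R V E) (cutvec R E X) (cutvec R E Y) ->
  {subset delta E W <= delta E (symdiff X Y)} ->
  forall f1 f2, f1 \in delta E W -> f2 \in delta E (symdiff X Y) -> f2 \notin delta E W -> False.
Proof.
move=> [_ [c [c0 [Hv Hf]]]] sub f1 f2 f1W f2Z f2W.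
set vX := cutvec R E X; set vY := cutvec R E Y.
set vA := cutvec R E (symdiff X W); set vB := cutvec R E (symdiff Y W).
have dX : dotp c vX = c0.
  have sX : segment vX vY vX.
    exists 1; split => // f; by rewrite subrr mul1r mul0r addr0.
  exact: (proj1 (Hf vX) sX).2.
have dY : dotp c vY = c0.
  have sY : segment vX vY vY.
    exists 0; split => // f; by rewrite subr0 mul1r mul0r add0r.
  exact: (proj1 (Hf vY) sY).2.
have bits : forall f : edge E, exists x y, [/\ x != y, val f = [set x; y] &
    (((x \in W) != (y \in W)) -> ((x \in X) != (y \in X)) != ((x \in Y) != (y \in Y)))].
  move=> f; have [x [y [xy ef]]] := edge_pair HG (valP f).
  exists x, y; split => // hW.
  have : val f \in delta E W by rewrite ef pair_delta // -ef (valP f).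
  move/sub; rewrite ef pair_delta // => /andP[_].
  by rewrite !in_symdiff; case: (x \in X); case: (y \in X); case: (x \in Y); case: (y \in Y).
have sumAB : dotp c vA + dotp c vB = dotp c vX + dotp c vY.
  rewrite /dotp -!big_split; apply: eq_bigr => f _ /=; rewrite -!mulrDr; congr (_ * _).
  have [x [y [xy ef hW]]] := bits f.
  rewrite /vA /vB /vX /vY !(cutvec_pair _ _ xy ef) !in_symdiff.
  have -> : (((x \in X) != (x \in W)) != ((y \in X) != (y \in W))) =
            (((x \in X) != (y \in X)) != ((x \in W) != (y \in W))).
    by case: (x \in X); case: (y \in X); case: (x \in W); case: (y \in W).
  have -> : (((x \in Y) != (x \in W)) != ((y \in Y) != (y \in W))) =
            (((x \in Y) != (y \in Y)) != ((x \in W) != (y \in W))).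
    by case: (x \in Y); case: (y \in Y); case: (x \in W); case: (y \in W).
  exact: bits_sum.
have hA := Hv vA (CUT_cutvec _ _ _). have hB := Hv vB (CUT_cutvec _ _ _).
have dA : dotp c vA = c0 by lra.
have [t [_ _ Ht]] := proj2 (Hf vA) (conj (CUT_cutvec _ _ _) dA).
have f2E : f2 \in E by move: f2Z; rewrite inE => /andP[].
have f1E : f1 \in E by move: f1W; rewrite inE => /andP[].
have [x2 [y2 [xy2 e2]]] := edge_pair HG f2E.
have [x1 [y1 [xy1 e1]]] := edge_pair HG f1E.
have := Ht (exist _ f2 f2E); rewrite /vA /vX /vY !(@cutvec_pair _ _ _ _ (exist _ f2 f2E) _ _ xy2 e2).
move: f2Z f2W; rewrite e2 !pair_delta // -e2 f2E /= !in_symdiff.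
move=> hZ hW heq.
have Ht1 : t = 1.
  move: hZ hW heq; case: (x2 \in X); case: (y2 \in X); case: (x2 \in Y); case: (y2 \in Y);
    case: (x2 \in W); case: (y2 \in W) => //= _ _ ?; lra.
have := Ht (exist _ f1 f1E); rewrite /vA /vX /vY !(@cutvec_pair _ _ _ _ (exist _ f1 f1E) _ _ xy1 e1).
move: f1W; rewrite e1 !pair_delta // -e1 f1E /= !in_symdiff Ht1 => hW1.
move: hW1; case: (x1 \in X); case: (y1 \in X);
    case: (x1 \in W); case: (y1 \in W) => //= _ ?; lra.
Qed.
Definition hadj (V : finType) (E : {set {set V}}) (Z : {set V}) : rel V :=
  fun x y => adj E x y && ((x \in Z) == (y \in Z)).

Lemma adj_sym (V : finType) (E : {set {set V}}) x y : adj E x y = adj E y x.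
Proof. by rewrite /adj setUC. Qed.

Lemma side_conn (V : finType) (E : {set {set V}}) (Z : {set V}) x y :
  connect (hadj E Z) x y -> (x \in Z) = (y \in Z).
Proof.
move/connectP=> [p hp ->]; elim: p x hp => //= a p IH x /andP [/andP [_ /eqP ->] /IH].
done.
Qed.

Lemma upath (V : finType) (e : rel V) x y :
  connect e x y -> exists p, [/\ path e x p, last x p = y & uniq (x :: p)].
Proof.
move/connectP=> [p hp ->]; case/shortenP: hp => p' hp' up' _; by exists p'.
Qed.

Definition comp (V : finType) (E : {set {set V}}) (Z : {set V}) a : {set V} :=
  [set v | connect (hadj E Z) a v].

Lemma comp_sub (V : finType) (E : {set {set V}}) (HG : simple_graph E) (Z : {set V}) (a : V) :
  {subset delta E (comp E Z a) <= delta E Z}.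
Proof.
move=> f fd; have fE : f \in E by move: fd; rewrite inE => /andP[].
have [x [y [xy ef]]] := edge_pair HG fE.
move: fd; rewrite ef !pair_delta // -ef fE /= !inE.
apply: contraTT => /negPn /eqP sxy.
have hxy : hadj E Z x y by rewrite /hadj /adj -ef fE sxy eqxx.
have hyx : hadj E Z y x by rewrite /hadj adj_sym /adj -ef fE sxy eqxx.
apply/negPn/eqP; apply/idP/idP => h.
- exact: connect_trans h (connect1 hxy).
- exact: connect_trans h (connect1 hyx).
Qed.

Lemma comp_self (V : finType) (E : {set {set V}}) (Z : {set V}) (z w : V) :
  z \in Z -> w \notin Z -> z != w -> [set z; w] \in E ->
  [set z; w] \in delta E (comp E Z z) /\ [set z; w] \in delta E (comp E Z w).
Proof.
move=> zZ wZ zw fE; rewrite !pair_delta // fE /= !inE !connect0 /=.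
have h1 := @side_conn _ E Z z w; have h2 := @side_conn _ E Z w z.
rewrite zZ (negbTE wZ) in h1 h2.
split.
- by case: (connect _ z w) h1 => // /(_ isT).
- by case: (connect _ w z) h2 => // /(_ isT).
Qed.

Lemma comp_reach (V : finType) (E : {set {set V}}) (Z : {set V}) (a z w : V) :
  z \in Z -> w \notin Z -> z != w ->
  [set z; w] \in delta E (comp E Z a) ->
  if a \in Z then connect (hadj E Z) a z else connect (hadj E Z) a w.
Proof.
move=> zZ wZ zw; rewrite pair_delta // => /andP[_]; rewrite !inE.
have h1 := @side_conn _ E Z a w; have h2 := @side_conn _ E Z a z.
rewrite zZ (negbTE wZ) in h1 h2.
case aZ: (a \in Z); rewrite aZ in h1 h2.
- by case: (connect _ a z); case: (connect _ a w) h1 => // /(_ isT).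
- by case: (connect _ a w); case: (connect _ a z) h2 => // /(_ isT).
Qed.
Lemma mk_cycle (V : finType) (E : {set {set V}}) (Z : {set V}) (z w z' w' : V) (p q : seq V) :
  z \in Z -> w \notin Z ->
  path (hadj E Z) z p -> last z p = z' -> uniq (z :: p) ->
  path (hadj E Z) w' q -> last w' q = w -> uniq (w' :: q) ->
  adj E z' w' -> adj E w z -> [set z; w] != [set z'; w'] ->
  [/\ simple_cycle E (z :: p ++ w' :: q), [set z; w] \in cycle_edges (z :: p ++ w' :: q),
     [set z'; w'] \in cycle_edges (z :: p ++ w' :: q) &
     forall f, f \in cycle_edges (z :: p ++ w' :: q) ->
       [\/ f = [set z; w], f = [set z'; w'] | exists x y, f = [set x; y] /\ (x \in Z) = (y \in Z)]].
Proof.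
move=> zZ wZ hp lp up hq lq uq a1 a2 ne.
have pZ : forall v, v \in z :: p -> v \in Z.
  by move=> v /(path_connect hp) /side_conn; rewrite zZ => <-.
have w'w : connect (hadj E Z) w' w by rewrite -lq; apply: (path_connect hq); apply: mem_last.
have qZ : forall v, v \in w' :: q -> v \notin Z.
  move=> v /(path_connect hq) /side_conn <-.
  by rewrite (side_conn w'w).
have sz : (3 <= size (z :: p ++ w' :: q))%N.
  rewrite /= size_cat /=.
  case: p {hp up pZ} lp => [/= zz|a p' _]; last by rewrite /=; lia.
  case: q {hq uq qZ w'w} lq => [/= ww|b q' _]; last by rewrite /=; lia.
  by move: ne; rewrite zz ww eqxx.
have us : uniq (z :: p ++ w' :: q).
  rewrite -cat_cons cat_uniq up uq andbT andTb.
  apply/hasPn => v /qZ vZ; apply/negP => /pZ; by rewrite (negbTE vZ).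
set r : rel V := fun x y => adj E x y &&
  [|| (x \in Z) == (y \in Z), [set x; y] == [set z'; w'] | [set x; y] == [set z; w]].
have hr : subrel (hadj E Z) r by move=> x y /andP[h1 h2]; rewrite /r h1 h2.
have cr : cycle r (z :: p ++ w' :: q).
  rewrite /= rcons_cat /= cat_path (sub_path hr hp) lp /= rcons_path (sub_path hr hq) lq.
  by rewrite /r a1 a2 eqxx orbT /= setUC eqxx !orbT.
have z'in : z' \in z :: p by rewrite -lp mem_last.
have win : w \in w' :: q by rewrite -lq mem_last.
have wnp : w \notin z :: p by apply/negP => /pZ; rewrite (negbTE wZ).
split.
- by split => //; apply: sub_cycle cr => x y /andP[].
- have ws : w \in z :: p ++ w' :: q by rewrite -cat_cons mem_cat win orbT.
  rewrite /cycle_edges; apply/imsetP; exists w => //.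
  rewrite next_nth ws.
  rewrite (index_cat w (z :: p)) (negbTE wnp) nth_default; first by rewrite setUC.
  by rewrite size_cat -lq (index_last uq) /= addnS addSn.
- have zs : z' \in z :: p ++ w' :: q by rewrite -cat_cons mem_cat z'in.
  rewrite /cycle_edges; apply/imsetP; exists z' => //.
  rewrite next_nth zs.
  rewrite (index_cat z' (z :: p)) z'in -lp (index_last up).
  by rewrite nth_cat ltnn subnn.
- move=> f; rewrite /cycle_edges => /imsetP [x xs ->].
  have /andP[_] := next_cycle cr xs.
  case/or3P => [/eqP e|/eqP ->|/eqP ->].
  + by constructor 3; exists x, (next (z :: p ++ w' :: q) x).
  + by constructor 2.
  + by constructor 1.
Qed.
Lemma three (T : finType) (D : {set T}) : (2 < #|D|)%N ->
  exists f1 f2 f3, [/\ f1 \in D, f2 \in D, f3 \in D & [/\ f1 != f2, f1 != f3 & f2 != f3]].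
Proof.
move=> h.
have /card_gt0P [f1 f1D] : (0 < #|D|)%N by apply: leq_ltn_trans h.
have h1 : (1 < #|D :\ f1|)%N by move: h; rewrite (cardsD1 f1 D) f1D add1n ltnS.
have /card_gt0P [f2 f2D] : (0 < #|D :\ f1|)%N by apply: leq_ltn_trans h1.
have h2 : (0 < #|D :\ f1 :\ f2|)%N by move: h1; rewrite (cardsD1 f2 (D :\ f1)) f2D add1n ltnS.
have /card_gt0P [f3 f3D] := h2.
move: f2D f3D; rewrite !inE => /andP[n21 f2D] /andP[n32 /andP[n31 f3D]].
exists f1, f2, f3; split => //; split; by rewrite eq_sym.
Qed.

Lemma pair_sides (V : finType) (Z : {set V}) (z w x y : V) :
  z \in Z -> w \notin Z -> [set z; w] = [set x; y] -> (x \in Z) = (y \in Z) -> False.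
Proof.
move=> zZ wZ e s.
have hz := set21 z w; have hw := set22 z w; rewrite e !inE in hz hw.
case/orP: hw => /eqP ?; case/orP: hz => /eqP ?; subst.
- by rewrite zZ in wZ.
- by rewrite zZ (negbTE wZ) in s.
- by rewrite zZ (negbTE wZ) in s.
- by rewrite zZ in wZ.
Qed.

Theorem lemma1 (R : realType) (V : finType) (E : {set {set V}})
  (HG : simple_graph E) (Hcactus : cactus E) (X Y : {set V}) :
  skeleton_adjacent (@CUT R V E) (cutvec R E X) (cutvec R E Y) ->
  (#|delta E (symdiff X Y)| <= 2)%N.
Proof.
move=> Hadj; rewrite leqNgt; apply/negP => H3.
set Z := symdiff X Y in H3.
have R1 : forall a f f', f \in delta E (comp E Z a) -> f' \in delta E Z ->
    f' \in delta E (comp E Z a).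
  move=> a f f' h1 h2; apply/negPn/negP => h3.
  exact: (poly_contra HG Hadj (@comp_sub _ _ HG Z a) h1 h2 h3).
have [f1 [f2 [f3 [d1 d2 d3 [n12 n13 n23]]]]] := three H3.
have [z1 [w1 [z1Z w1Z f1E ef1]]] := delta_orient HG d1.
have [z2 [w2 [z2Z w2Z f2E ef2]]] := delta_orient HG d2.
have [z3 [w3 [z3Z w3Z f3E ef3]]] := delta_orient HG d3.
have zw1 : z1 != w1 by apply/eqP => e; move: w1Z; rewrite -e z1Z.
have zw2 : z2 != w2 by apply/eqP => e; move: w2Z; rewrite -e z2Z.
have zw3 : z3 != w3 by apply/eqP => e; move: w3Z; rewrite -e z3Z.
subst f1 f2 f3.
have [c1z c1w] := comp_self z1Z w1Z zw1 f1E.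
have [c2z c2w] := comp_self z2Z w2Z zw2 f2E.
have [c3z c3w] := comp_self z3Z w3Z zw3 f3E.
have c12 : connect (hadj E Z) z1 z2.
  by have := comp_reach z2Z w2Z zw2 (R1 _ _ _ c1z d2); rewrite z1Z.
have c13 : connect (hadj E Z) z1 z3.
  by have := comp_reach z3Z w3Z zw3 (R1 _ _ _ c1z d3); rewrite z1Z.
have c21 : connect (hadj E Z) w2 w1.
  by have := comp_reach z1Z w1Z zw1 (R1 _ _ _ c2w d1); rewrite (negbTE w2Z).
have c31 : connect (hadj E Z) w3 w1.
  by have := comp_reach z1Z w1Z zw1 (R1 _ _ _ c3w d1); rewrite (negbTE w3Z).
have [p1 [hp1 lp1 up1]] := upath c12.
have [p2 [hp2 lp2 up2]] := upath c13.
have [q1 [hq1 lq1 uq1]] := upath c21.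
have [q2 [hq2 lq2 uq2]] := upath c31.
have a21 : adj E w1 z1 by rewrite adj_sym.
have [cs1 e1s1 e2s1 _] := mk_cycle z1Z w1Z hp1 lp1 up1 hq1 lq1 uq1 f2E a21 n12.
have [cs2 e1s2 _ all2] := mk_cycle z1Z w1Z hp2 lp2 up2 hq2 lq2 uq2 f3E a21 n13.
have eq12 := Hcactus.2 _ f1E _ _ cs1 cs2 e1s1 e1s2.
rewrite eq12 in e2s1.
case: (all2 _ e2s1) => [e|e|[x [y [e s]]]].
- by rewrite e eqxx in n12.
- by rewrite e eqxx in n23.
- exact: pair_sides z2Z w2Z e s.
Qed.
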